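(* Let $K$ be a commutative Noetherian ring with $1$ and let $X$ be a finite set. Every right ideal $R$ of the free $K$-algebra $K\langle X\rangle$ such that $K\langle X\rangle/R$ is a finitely generated $K$-module is finitely presented as a $K$-algebra.
   Context: The free $K$-algebra $K\langle X\rangle$ is the semigroup ring over $K$ of the free semigroup $X^+$ (polynomials in non-commuting variables from $X$ without constant term; no identity). A $K$-algebra is finitely presented if it is isomorphic to $K\langle Y\rangle/I$ with $Y$ finite and $I$ an ideal of $K\langle Y\rangle$ finitely generated as an ideal. *)

(* Defs.v *)
From mathcomp Require Import all_boot all_algebra.
Set Implicit Arguments. Unset Strict Implicit. Unset Printing Implicit Defensive.
Import GRing.Theory.
Local Open Scope ring_scope.

Definition is_ideal (K : comNzRingType) (I : K -> Prop) : Prop :=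
  I 0 /\ (forall a b, I a -> I b -> I (a + b)) /\ (forall c a, I a -> I (c * a)).

Definition noetherian (K : comNzRingType) : Prop :=
  forall I : K -> Prop, is_ideal I ->
    exists (n : nat) (g : 'I_n -> K),
      forall a, I a <-> exists c : 'I_n -> K, a = \sum_(i < n) c i * g i.

(* An element of K<X> is represented by its coefficient function on words
   (elements of the free monoid seq X); it must vanish on the empty word
   (no constant term) and have finite support (X is finite, so finite
   support = vanishing on all sufficiently long words). *)

Definition is_ncpoly (K : comNzRingType) (X : finType) (f : seq X -> K) : Prop :=
  f [::] = 0 /\ exists N : nat, forall w : seq X, (N <= size w)%N -> f w = 0.

Definition nczero (K : comNzRingType) (X : finType) : seq X -> K := fun _ => 0.

Definition ncadd (K : comNzRingType) (X : finType) (f g : seq X -> K) : seq X -> K :=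
  fun w => f w + g w.

Definition ncscale (K : comNzRingType) (X : finType) (c : K) (f : seq X -> K) : seq X -> K :=
  fun w => c * f w.

(* product in the semigroup ring of X^+ : (fg)(w) = sum over w = u v of f(u) g(v)
   (the splits with u or v empty contribute 0 since f [::] = g [::] = 0) *)
Definition ncmul (K : comNzRingType) (X : finType) (f g : seq X -> K) : seq X -> K :=
  fun w => \sum_(i < (size w).+1) f (take i w) * g (drop i w).

Definition is_right_ideal (K : comNzRingType) (X : finType) (R : (seq X -> K) -> Prop) : Prop :=
  (forall f, R f -> is_ncpoly f) /\
  R (@nczero K X) /\
  (forall f g, R f -> R g -> R (ncadd f g)) /\
  (forall c f, R f -> R (ncscale c f)) /\
  (forall f g, R f -> is_ncpoly g -> R (ncmul f g)).

Definition quotient_fg (K : comNzRingType) (X : finType) (R : (seq X -> K) -> Prop) : Prop :=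
  exists (n : nat) (g : 'I_n -> seq X -> K),
    (forall i, is_ncpoly (g i)) /\
    forall f, is_ncpoly f ->
      exists c : 'I_n -> K, R (fun w => f w - \sum_(i < n) c i * g i w).

Inductive in_gen_ideal (K : comNzRingType) (Y : finType) (m : nat)
    (rels : 'I_m -> seq Y -> K) : (seq Y -> K) -> Prop :=
| gi_gen i : in_gen_ideal rels (rels i)
| gi_zero : in_gen_ideal rels (@nczero K Y)
| gi_add f g : in_gen_ideal rels f -> in_gen_ideal rels g -> in_gen_ideal rels (ncadd f g)
| gi_scale c f : in_gen_ideal rels f -> in_gen_ideal rels (ncscale c f)
| gi_mull a f : is_ncpoly a -> in_gen_ideal rels f -> in_gen_ideal rels (ncmul a f)
| gi_mulr f b : is_ncpoly b -> in_gen_ideal rels f -> in_gen_ideal rels (ncmul f b).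

Definition is_alg_hom (K : comNzRingType) (Y X : finType) (phi : (seq Y -> K) -> (seq X -> K)) : Prop :=
  (forall f g, is_ncpoly f -> is_ncpoly g -> phi (ncadd f g) = ncadd (phi f) (phi g)) /\
  (forall c f, is_ncpoly f -> phi (ncscale c f) = ncscale c (phi f)) /\
  (forall f g, is_ncpoly f -> is_ncpoly g -> phi (ncmul f g) = ncmul (phi f) (phi g)).

(* The subalgebra R of K<X> is finitely presented: R is isomorphic (as a K-algebra)
   to K<Y>/I with Y finite and I a finitely generated ideal; i.e. there is a
   K-algebra homomorphism from K<Y> onto R whose kernel is I (first isomorphism
   theorem). *)
Definition fin_presented_subalg (K : comNzRingType) (X : finType) (R : (seq X -> K) -> Prop) : Prop :=
  exists (Y : finType) (phi : (seq Y -> K) -> (seq X -> K)) (m : nat) (rels : 'I_m -> seq Y -> K),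
    (forall i, is_ncpoly (rels i)) /\
    is_alg_hom phi /\
    (forall f, is_ncpoly f -> R (phi f)) /\
    (forall r, R r -> exists f, is_ncpoly f /\ phi f = r) /\
    (forall f, is_ncpoly f -> (phi f = @nczero K X <-> in_gen_ideal rels f)).

(* Main.v *)
Require Import Defs.
From HB Require Import structures.
From mathcomp Require Import all_boot all_algebra.
From mathcomp Require Import boolp zify.
Set Implicit Arguments. Unset Strict Implicit. Unset Printing Implicit Defensive.
Import GRing.Theory.
Local Open Scope ring_scope.

Section PS.
Variables (K : comNzRingType) (X : finType).

Definition ps : Type := seq X -> K.
HB.instance Definition _ := Choice.on ps.

Definition ps_opp (f : ps) : ps := fun w => - f w.

Lemma ps_addA : associative (@ncadd K X).
Proof. by move=> f g h; apply: funext => w; rewrite /ncadd addrA. Qed.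
Lemma ps_addC : commutative (@ncadd K X).
Proof. by move=> f g; apply: funext => w; rewrite /ncadd addrC. Qed.
Lemma ps_add0 : left_id (@nczero K X) (@ncadd K X).
Proof. by move=> f; apply: funext => w; rewrite /ncadd /nczero add0r. Qed.
Lemma ps_addN : left_inverse (@nczero K X) ps_opp (@ncadd K X).
Proof. by move=> f; apply: funext => w; rewrite /ncadd /nczero /ps_opp addNr. Qed.

HB.instance Definition _ := GRing.isZmodule.Build ps ps_addA ps_addC ps_add0 ps_addN.

Definition ps_one : ps := fun w => if w is [::] then 1 else 0.

Definition pder (x : X) (f : seq X -> K) : seq X -> K := fun u => f (x :: u).

Lemma ncmul_nil (f g : seq X -> K) : ncmul f g [::] = f [::] * g [::].
Proof. by rewrite /ncmul big_ord_recl big_ord0 addr0. Qed.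

Lemma ncmul_cons (f g : seq X -> K) x w :
  ncmul f g (x :: w) = f [::] * g (x :: w) + ncmul (pder x f) g w.
Proof. by rewrite /ncmul /= big_ord_recl /=. Qed.

Lemma ncmulDl_pt (f f' g : seq X -> K) w :
  ncmul (fun u => f u + f' u) g w = ncmul f g w + ncmul f' g w.
Proof. by rewrite /ncmul -big_split /=; apply: eq_bigr => i _; rewrite mulrDl. Qed.
Lemma ncmulDr_pt (f g g' : seq X -> K) w :
  ncmul f (fun u => g u + g' u) w = ncmul f g w + ncmul f g' w.
Proof. by rewrite /ncmul -big_split /=; apply: eq_bigr => i _; rewrite mulrDr. Qed.
Lemma ncmulZl_pt c (f g : seq X -> K) w :
  ncmul (fun u => c * f u) g w = c * ncmul f g w.
Proof. by rewrite /ncmul mulr_sumr; apply: eq_bigr => i _; rewrite mulrA. Qed.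
Lemma ncmulZr_pt c (f g : seq X -> K) w :
  ncmul f (fun u => c * g u) w = c * ncmul f g w.
Proof. by rewrite /ncmul mulr_sumr; apply: eq_bigr => i _; rewrite mulrCA. Qed.
Lemma ncmul0l_pt (g : seq X -> K) w : ncmul (fun _ => 0) g w = 0.
Proof. by rewrite /ncmul big1 // => i _; rewrite mul0r. Qed.

Lemma ncmulA_pt w : forall (f g h : seq X -> K),
  ncmul (ncmul f g) h w = ncmul f (ncmul g h) w.
Proof.
elim: w => [|x w IH] f g h; first by rewrite !ncmul_nil mulrA.
rewrite !ncmul_cons ncmul_nil.
have -> : pder x (ncmul f g) = fun u => f [::] * g (x :: u) + ncmul (pder x f) g u.
  by apply: funext => u; rewrite /pder ncmul_cons.
rewrite ncmulDl_pt ncmulZl_pt IH mulrDr !mulrA addrA.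
done.
Qed.

Lemma ps_mulA : associative (@ncmul K X).
Proof. by move=> f g h; apply: funext => w; rewrite ncmulA_pt. Qed.
Lemma ps_mul1 : left_id ps_one (@ncmul K X).
Proof.
move=> f; apply: funext; case=> [|x w]; first by rewrite ncmul_nil mul1r.
rewrite ncmul_cons /= mul1r.
have -> : pder x ps_one = fun _ => 0 by apply: funext.
by rewrite ncmul0l_pt addr0.
Qed.
Lemma ps_mul1r_pt w : forall f, ncmul f ps_one w = f w.
Proof.
elim: w => [|x w IH] f; first by rewrite ncmul_nil mulr1.
by rewrite ncmul_cons /= mulr0 add0r IH.
Qed.
Lemma ps_mulr1 : right_id ps_one (@ncmul K X).
Proof. by move=> f; apply: funext => w; rewrite ps_mul1r_pt. Qed.
Lemma ps_mulDl : left_distributive (@ncmul K X) (@ncadd K X).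
Proof. by move=> f f' g; apply: funext => w; rewrite /ncadd ncmulDl_pt. Qed.
Lemma ps_mulDr : right_distributive (@ncmul K X) (@ncadd K X).
Proof. by move=> f g g'; apply: funext => w; rewrite /ncadd ncmulDr_pt. Qed.
Lemma ps_one_neq0 : ps_one != 0.
Proof.
apply/eqP => /(congr1 (fun f : ps => f [::])) /= /eqP.
by rewrite /nczero oner_eq0.
Qed.

HB.instance Definition _ := GRing.Zmodule_isNzRing.Build ps
  ps_mulA ps_mul1 ps_mulr1 ps_mulDl ps_mulDr ps_one_neq0.

Definition ps_scale (a : K) (f : ps) : ps := ncscale a f.
Lemma ps_scaleA a b (v : ps) : ps_scale a (ps_scale b v) = ps_scale (a * b) v.
Proof. by apply: funext => w; rewrite /ps_scale /ncscale mulrA. Qed.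
Lemma ps_scale1 : left_id 1 ps_scale.
Proof. by move=> v; apply: funext => w; rewrite /ps_scale /ncscale mul1r. Qed.
Lemma ps_scaleDr : right_distributive ps_scale +%R.
Proof. by move=> a u v; apply: funext => w; rewrite /ps_scale /ncscale /= /ncadd mulrDr. Qed.
Lemma ps_scaleDl (v : ps) : {morph ps_scale^~ v : a b / a + b}.
Proof. by move=> a b; apply: funext => w; rewrite /ps_scale /ncscale /= /ncadd mulrDl. Qed.

HB.instance Definition _ := GRing.Zmodule_isLmodule.Build K ps
  ps_scaleA ps_scale1 ps_scaleDr ps_scaleDl.

Lemma psE_add (f g : ps) w : (f + g) w = f w + g w. Proof. by []. Qed.
Lemma psE_opp (f : ps) w : (- f) w = - f w. Proof. by []. Qed.
Lemma psE_sub (f g : ps) w : (f - g) w = f w - g w. Proof. by []. Qed.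
Lemma psE_zero w : (0 : ps) w = 0. Proof. by []. Qed.
Lemma psE_scale a (f : ps) w : (a *: f) w = a * f w. Proof. by []. Qed.
Lemma psE_mul (f g : ps) w : (f * g) w = ncmul f g w. Proof. by []. Qed.
Lemma psE_one w : (1 : ps) w = if w is [::] then 1 else 0. Proof. by []. Qed.
Lemma psE_sum I (r : seq I) (P : pred I) (F : I -> ps) w :
  (\sum_(i <- r | P i) F i) w = \sum_(i <- r | P i) F i w.
Proof.
elim: r => [|i r IH]; first by rewrite !big_nil.
by rewrite !big_cons; case: (P i); rewrite ?psE_add IH.
Qed.

Lemma ps_scalerAl a (u v : ps) : a *: (u * v) = (a *: u) * v.
Proof. by apply: funext => w; rewrite psE_scale !psE_mul -ncmulZl_pt. Qed.
HB.instance Definition _ := GRing.Lmodule_isLalgebra.Build K ps ps_scalerAl.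
Lemma ps_scalerAr a (u v : ps) : a *: (u * v) = u * (a *: v).
Proof. by apply: funext => w; rewrite psE_scale !psE_mul -ncmulZr_pt. Qed.
HB.instance Definition _ := GRing.Lalgebra_isAlgebra.Build K ps ps_scalerAr.


Definition mon (u : seq X) : ps := fun w => (w == u)%:R.

Lemma mon_nil : mon [::] = 1.
Proof. by apply: funext => -[|x w]. Qed.

Lemma pder_mon x u : pder x (mon u) =
  if u is y :: u' then (fun t => (x == y)%:R * mon u' t) else (fun _ => 0).
Proof.
apply: funext => t; rewrite /pder /mon; case: u => [|y u] //=.
by rewrite eqseq_cons; case: (x == y); rewrite ?mul1r ?mul0r.
Qed.

Lemma monM_pt w : forall u v, ncmul (mon u) (mon v) w = mon (u ++ v) w.
Proof.
elim: w => [|x w IH] u v.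
  by rewrite ncmul_nil /mon; case: u => [|y u]; case: v => [|z v]; rewrite ?mulr1 ?mulr0 ?mul0r.
rewrite ncmul_cons pder_mon; case: u => [|y u] /=.
  by rewrite ncmul0l_pt addr0 {1}/mon /= mul1r.
rewrite {1}/mon /= mul0r add0r ncmulZl_pt IH /mon eqseq_cons.
by case: (x == y); rewrite ?mul1r ?mul0r.
Qed.

Lemma monM u v : mon u * mon v = mon (u ++ v).
Proof. by apply: funext => w; rewrite psE_mul monM_pt. Qed.

Definition fsupp (N : nat) (f : seq X -> K) := forall w, (N <= size w)%N -> f w = 0.
Definition low (k : nat) (f : seq X -> K) := forall w, (size w < k)%N -> f w = 0.

Lemma fsupp_le N N' f : (N <= N')%N -> fsupp N f -> fsupp N' f.
Proof. by move=> le H w hw; apply: H; apply: leq_trans hw. Qed.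
Lemma fsupp0 N : fsupp N (0 : ps). Proof. by []. Qed.
Lemma fsuppD N (f g : ps) : fsupp N f -> fsupp N g -> fsupp N (f + g).
Proof. by move=> Hf Hg w hw; rewrite psE_add Hf ?Hg ?addr0. Qed.
Lemma fsuppN N (f : ps) : fsupp N f -> fsupp N (- f).
Proof. by move=> Hf w hw; rewrite psE_opp Hf ?oppr0. Qed.
Lemma fsuppZ N a (f : ps) : fsupp N f -> fsupp N (a *: f).
Proof. by move=> Hf w hw; rewrite psE_scale Hf ?mulr0. Qed.
Lemma fsupp_sum N I (r : seq I) (F : I -> ps) :
  (forall i, fsupp N (F i)) -> fsupp N (\sum_(i <- r) F i).
Proof. by move=> H w hw; rewrite psE_sum big1 // => i _; rewrite H. Qed.
Lemma fsuppM a b (f g : ps) : fsupp a f -> fsupp b g -> fsupp (a + b) (f * g).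
Proof.
move=> Hf Hg w hw; rewrite psE_mul /ncmul big1 // => i _.
have hi := ltn_ord i.
have [lt|ge] := ltnP i a.
  have Hd : (b <= size (drop i w))%N by rewrite size_drop; lia.
  by rewrite (Hg _ Hd) mulr0.
have Ht : (a <= size (take i w))%N by rewrite size_take; case: (ltnP i (size w)) => Hc; lia.
by rewrite (Hf _ Ht) mul0r.
Qed.
Lemma fsupp_mon u : fsupp (size u).+1 (mon u).
Proof. by move=> w hw; rewrite /mon; case: eqP => // E; subst w; rewrite ltnn in hw. Qed.

Lemma low0 k : low k (0 : ps). Proof. by []. Qed.
Lemma lowD k (f g : ps) : low k f -> low k g -> low k (f + g).
Proof. by move=> Hf Hg w hw; rewrite psE_add Hf ?Hg ?addr0. Qed.
Lemma lowN k (f : ps) : low k f -> low k (- f).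
Proof. by move=> Hf w hw; rewrite psE_opp Hf ?oppr0. Qed.
Lemma lowZ k a (f : ps) : low k f -> low k (a *: f).
Proof. by move=> Hf w hw; rewrite psE_scale Hf ?mulr0. Qed.
Lemma low_sum k I (r : seq I) (F : I -> ps) :
  (forall i, low k (F i)) -> low k (\sum_(i <- r) F i).
Proof. by move=> H w hw; rewrite psE_sum big1 // => i _; rewrite H. Qed.
Lemma lowM a b (f g : ps) : low a f -> low b g -> low (a + b) (f * g).
Proof.
move=> Hf Hg w hw; rewrite psE_mul /ncmul big1 // => i _.
have hi := ltn_ord i.
have [lt|ge] := ltnP i a.
  have Ht : (size (take i w) < a)%N by rewrite size_take; case: (ltnP i (size w)) => Hc; lia.
  by rewrite (Hf _ Ht) mul0r.
have Hd : (size (drop i w) < b)%N by rewrite size_drop; lia.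
by rewrite (Hg _ Hd) mulr0.
Qed.

End PS.
Section Words.
Variables (K : comNzRingType) (X : finType).
Local Notation ps := (ps K X).

Definition words (n : nat) : seq (seq X) := map (@tval n X) (enum {: n.-tuple X}).
Lemma mem_words n w : (w \in words n) = (size w == n).
Proof.
apply/mapP/eqP => [[t _ ->]|<-]; first exact: size_tuple.
by exists (in_tuple w); rewrite ?mem_enum.
Qed.
Lemma uniq_words n : uniq (words n).
Proof. by rewrite map_inj_uniq ?enum_uniq //; apply: val_inj. Qed.

Definition wupto (N : nat) : seq (seq X) := flatten [seq words n | n <- iota 0 N].
Lemma mem_wupto N w : (w \in wupto N) = (size w < N)%N.
Proof.
apply/flattenP/idP => [[s /mapP [n]]|hw].
  by rewrite mem_iota add0n => /andP [_ hn] -> ; rewrite mem_words => /eqP ->.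
by exists (words (size w)); rewrite ?mem_words //; apply/mapP; exists (size w); rewrite // mem_iota.
Qed.
Lemma uniq_wupto N : uniq (wupto N).
Proof.
elim: N => [|N IH] //; rewrite /wupto -addn1 iotaD map_cat flatten_cat cat_uniq.
rewrite IH /= cats0 uniq_words andbT; apply/hasPn => w; rewrite mem_words => /eqP hw.
by rewrite mem_wupto hw ltnn.
Qed.

Lemma sum_mon_pt (r : seq (seq X)) (F : seq X -> K) w : uniq r ->
  \sum_(u <- r) F u * mon K u w = if w \in r then F w else 0.
Proof.
elim: r => [|a r IH] /=; first by rewrite big_nil.
case/andP => ar ur; rewrite big_cons IH // in_cons /mon.
case: (eqVneq w a) => [->|ne] /=; last by rewrite mulr0 add0r.
by rewrite (negbTE ar) mulr1 addr0.
Qed.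

Lemma ps_expand N (f : ps) : fsupp N f -> f = \sum_(u <- wupto N) f u *: mon K u.
Proof.
move=> Hf; apply: funext => w; rewrite psE_sum.
rewrite (eq_bigr (fun u => f u * mon K u w)) ?sum_mon_pt ?uniq_wupto //.
by rewrite mem_wupto; case: ltnP => // h; rewrite Hf.
Qed.

Lemma sum_wupto_ext N N' (V : zmodType) (F : seq X -> V) :
  (N <= N')%N -> (forall w, (N <= size w)%N -> F w = 0) ->
  \sum_(u <- wupto N') F u = \sum_(u <- wupto N) F u.
Proof.
move=> le H; rewrite /wupto -(subnKC le) iotaD map_cat flatten_cat big_cat /=.
rewrite [X in _ + X]big1_seq ?addr0 // => u /andP [_].
move/flattenP => [s /mapP [n]]; rewrite mem_iota => /andP [hn _] -> .
by rewrite mem_words => /eqP hu; apply: H; rewrite hu.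
Qed.

End Words.
Section Subst.
Variables (K : comNzRingType) (X Y : finType).
Variable yimg : Y -> ps K X.
Hypothesis Hyimg : forall y, low 1 (yimg y).

Definition Mw (u : seq Y) : ps K X := \prod_(y <- u) yimg y.
Definition subst (F : ps K Y) : ps K X :=
  fun w => \sum_(u <- wupto Y (size w).+1) F u * Mw u w.

Lemma Mw_nil : Mw [::] = 1. Proof. by rewrite /Mw big_nil. Qed.
Lemma Mw_cons y u : Mw (y :: u) = yimg y * Mw u. Proof. by rewrite /Mw big_cons. Qed.
Lemma Mw_cat u v : Mw (u ++ v) = Mw u * Mw v. Proof. by rewrite /Mw big_cat. Qed.
Lemma low_Mw u : low (size u) (Mw u).
Proof.
elim: u => [|y u IH]; first by move=> w.
by rewrite Mw_cons /=; have := lowM (Hyimg y) IH; rewrite add1n.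
Qed.

Lemma subst_ext N (F : ps K Y) w : ((size w).+1 <= N)%N ->
  subst F w = \sum_(u <- wupto Y N) F u * Mw u w.
Proof.
move=> hN; rewrite /subst (sum_wupto_ext hN) // => u hu.
by rewrite low_Mw ?mulr0 // (leq_trans _ hu).
Qed.

Lemma substD F G : subst (F + G) = subst F + subst G.
Proof. by apply: funext => w; rewrite psE_add /subst -big_split; apply: eq_bigr => u _; rewrite psE_add mulrDl. Qed.
Lemma substZ a F : subst (a *: F) = a *: subst F.
Proof. by apply: funext => w; rewrite psE_scale /subst mulr_sumr; apply: eq_bigr => u _; rewrite psE_scale mulrA. Qed.
Lemma subst0 : subst 0 = 0.
Proof. by apply: funext => w; rewrite psE_zero /subst big1 // => u _; rewrite psE_zero mul0r. Qed.
Lemma substN F : subst (- F) = - subst F.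
Proof. by rewrite -scaleN1r substZ scaleN1r. Qed.
Lemma substB F G : subst (F - G) = subst F - subst G.
Proof. by rewrite substD substN. Qed.
Lemma subst_sum I (r : seq I) (P : pred I) (F : I -> ps K Y) :
  subst (\sum_(i <- r | P i) F i) = \sum_(i <- r | P i) subst (F i).
Proof.
elim: r => [|i r IH]; first by rewrite !big_nil subst0.
by rewrite !big_cons; case: (P i); rewrite ?substD IH.
Qed.

Lemma subst_mon u : subst (mon K u) = Mw u.
Proof.
apply: funext => w; rewrite /subst.
rewrite (eq_bigr (fun u' => Mw u' w * mon K u' u)); last by move=> u' _; rewrite mulrC /mon eq_sym.
rewrite sum_mon_pt ?uniq_wupto // mem_wupto; case: ltnP => // h.
by rewrite low_Mw.
Qed.

Lemma subst_expand N (F : ps K Y) : fsupp N F -> subst F = \sum_(u <- wupto Y N) F u *: Mw u.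
Proof.
move=> HF; rewrite {1}(ps_expand HF) subst_sum; apply: eq_bigr => u _.
by rewrite substZ subst_mon.
Qed.

Lemma subst_mul_fin N (F G : ps K Y) : fsupp N F -> fsupp N G ->
  subst (F * G) = subst F * subst G.
Proof.
move=> HF HG; rewrite (subst_expand HF) (subst_expand HG).
rewrite {1}(ps_expand HF) {1}(ps_expand HG) mulr_suml subst_sum mulr_suml.
apply: eq_bigr => u _; rewrite mulr_sumr subst_sum mulr_sumr; apply: eq_bigr => v _.
by rewrite -scalerAl -scalerAr substZ substZ monM subst_mon Mw_cat -scalerAl -scalerAr.
Qed.

Definition trunc N (F : ps K Y) : ps K Y := fun u => if (size u < N)%N then F u else 0.
Lemma fsupp_trunc N F : fsupp N (trunc N F).
Proof. by move=> u hu; rewrite /trunc ltnNge hu. Qed.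

Lemma ncmul_local (Z : finType) (f f' g g' : seq Z -> K) w :
  (forall v, (size v <= size w)%N -> f v = f' v /\ g v = g' v) ->
  ncmul f g w = ncmul f' g' w.
Proof.
move=> H; apply: eq_bigr => i _.
have h1 : (size (take i w) <= size w)%N by rewrite size_take; case: ltnP => // h; exact: ltnW.
have h2 : (size (drop i w) <= size w)%N by rewrite size_drop leq_subr.
have [-> _] := H _ h1.
by have [_ ->] := H _ h2.
Qed.

Lemma subst_trunc N F w : (size w < N)%N -> subst (trunc N F) w = subst F w.
Proof.
move=> h; rewrite /subst; apply: eq_big_seq => u; rewrite mem_wupto => hu.
by rewrite /trunc (leq_ltn_trans _ h).
Qed.

Lemma substM F G : subst (F * G) = subst F * subst G.
Proof.
apply: funext => w; set N := (size w).+1.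
have E1 : subst (F * G) w = subst (trunc N F * trunc N G) w.
  rewrite /subst; apply: eq_big_seq => u; rewrite mem_wupto => hu; congr (_ * _).
  rewrite !psE_mul; apply: ncmul_local => v hv.
  by rewrite /trunc (leq_ltn_trans hv hu).
rewrite E1 (subst_mul_fin (@fsupp_trunc N F) (@fsupp_trunc N G)) !psE_mul.
apply: ncmul_local => v hv; rewrite !subst_trunc //.
Qed.

Lemma subst_nil F : subst F [::] = F [::].
Proof.
rewrite /subst /=.
have P : perm_eq (wupto Y 1) [:: [::]].
  apply: uniq_perm; rewrite ?uniq_wupto // => u; rewrite mem_wupto inE.
  by case: u.
by rewrite (perm_big _ P) big_seq1 Mw_nil psE_one mulr1.
Qed.

End Subst.

Section Noeth.
Variables (K : comNzRingType) (I : finType).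
Hypothesis HK : noetherian K.

Definition submod (M : {ffun I -> K^o} -> Prop) :=
  M 0 /\ (forall u v, M u -> M v -> M (u + v)) /\ (forall a u, M u -> M (a *: u)).

Definition fgen (M : {ffun I -> K^o} -> Prop) :=
  exists n (g : 'I_n -> {ffun I -> K^o}), (forall k, M (g k)) /\
    forall v, M v -> exists c : 'I_n -> K, v = \sum_k c k *: g k.

Lemma fgen_aux (l : seq I) : forall M, submod M ->
  (forall v, M v -> forall i, i \notin l -> v i = 0) -> fgen M.
Proof.
elim: l => [|i l IH] M [M0 [MD MZ]] Hl.
  exists 0, (fun _ => 0); split=> // v Mv; exists (fun _ => 0).
  by rewrite big_ord0; apply/ffunP => j; rewrite ffunE Hl.
pose J (a : K) := exists v, M v /\ v i = a.
have idJ : is_ideal J.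
  split; first by exists 0; rewrite ffunE.
  split; first by move=> a b [u [Mu <-]] [v [Mv <-]]; exists (u + v); rewrite ffunE; split=> //; apply: MD.
  by move=> c a [u [Mu <-]]; exists (c *: u); rewrite ffunE; split=> //; apply: MZ.
have [n [a Ha]] := HK idJ.
have Jak : forall k, J (a k).
  move=> k; apply/Ha; exists (fun k' => (k' == k)%:R).
  rewrite (bigD1 k) //= eqxx mul1r big1 ?addr0 // => k' /negbTE ->; by rewrite mul0r.
pose vk k := projT1 (cid (Jak k)).
have Hvk : forall k, M (vk k) /\ vk k i = a k by move=> k; exact: (projT2 (cid (Jak k))).
pose M' v := M v /\ v i = 0.
have sM' : submod M'.
  split; first by split=> //; rewrite ffunE.
  split; first by move=> u v [Mu ui] [Mv vi]; split; [apply: MD|rewrite ffunE ui vi addr0].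
  by move=> c u [Mu ui]; split; [apply: MZ|rewrite ffunE ui scaler0].
have [n' [h [Mh Hh]]] : fgen M'.
  apply: IH => // v [Mv vi] j nl.
  case: (eqVneq j i) => [->|ne'] //; by apply: Hl => //; rewrite in_cons negb_or ne' nl.
pose g (k : 'I_(n + n')) := match split k with inl k1 => vk k1 | inr k2 => h k2 end.
exists (n + n'), g; split.
  by move=> k; rewrite /g; case: (split k) => [k1|k2]; [case: (Hvk k1)|case: (Mh k2)].
move=> v Mv.
have [c Hc] : exists c : 'I_n -> K, v i = \sum_k c k * a k by apply/Ha; exists v.
set v' := v - \sum_k c k *: vk k.
have Mneg : forall u, M u -> M (- u) by move=> u Mu; rewrite -scaleN1r; apply: MZ.
have Msum : forall (F : 'I_n -> {ffun I -> K^o}), (forall k, M (F k)) -> M (\sum_k F k).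
  move=> F HF; elim/big_ind: _ => //; exact: MD.
have Mv' : M' v'.
  split; first by apply: MD => //; apply: Mneg; apply: Msum => k; apply: MZ; case: (Hvk k).
  rewrite /v' !ffunE Hc sum_ffunE; apply/eqP; rewrite subr_eq0; apply/eqP; apply: eq_bigr => k _.
  by rewrite ffunE; case: (Hvk k) => _ ->.
have [d Hd] := Hh _ Mv'.
exists (fun k => match split k with inl k1 => c k1 | inr k2 => d k2 end).
rewrite big_split_ord /=.
have E1 : forall k1 : 'I_n, split (lshift n' k1) = inl k1 by move=> k1; exact: (unsplitK (inl _ k1)).
have E2 : forall k2 : 'I_n', split (rshift n k2) = inr k2 by move=> k2; exact: (unsplitK (inr _ k2)).
rewrite (eq_bigr (fun k1 => c k1 *: vk k1)); last by move=> k1 _; rewrite /g !E1.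
rewrite (eq_bigr (fun k2 => d k2 *: h k2)); last by move=> k2 _; rewrite /g !E2.
by rewrite -Hd /v' addrC subrK.
Qed.

Lemma fgen_submod M : submod M -> fgen M.
Proof. by move=> sM; apply: (fgen_aux (l := enum I)) => // v _ i; rewrite mem_enum. Qed.

End Noeth.

Section Gen.
Variable K : comNzRingType.

Lemma sum_pick (T : eqType) (V : lmodType K) (r : seq T) (F : T -> V) w : uniq r ->
  \sum_(u <- r) (u == w)%:R *: F u = if w \in r then F w else 0.
Proof.
elim: r => [|a r IH] /=; first by rewrite big_nil.
case/andP => ar ur; rewrite big_cons IH // in_cons.
case: (eqVneq a w) => [<-|ne] /=; first by rewrite (negbTE ar) scale1r addr0.
by rewrite scale0r add0r.
Qed.

Variable X : finType.

Definition bnd (r : ps K X) : nat :=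
  match pselect (exists N, fsupp N r) with left H => projT1 (cid H) | right _ => 0%N end.
Lemma bndP N (r : ps K X) : fsupp N r -> fsupp (bnd r) r.
Proof.
move=> H; rewrite /bnd; case: pselect => [H'|n]; first exact: (projT2 (cid H')).
by case: n; exists N.
Qed.

Definition fsum (V : lmodType K) (r : ps K X) (F : seq X -> V) : V :=
  \sum_(u <- wupto X (bnd r)) r u *: F u.

Lemma fsumE (V : lmodType K) N (r : ps K X) (F : seq X -> V) : fsupp N r ->
  fsum r F = \sum_(u <- wupto X N) r u *: F u.
Proof.
move=> H; have H' := bndP H; rewrite /fsum.
rewrite -(@sum_wupto_ext _ _ (maxn N (bnd r))) ?leq_maxr //; last first.
  by move=> w hw; rewrite H' ?scale0r.
rewrite (@sum_wupto_ext _ N (maxn N (bnd r))) ?leq_maxl //.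
by move=> w hw; rewrite H ?scale0r.
Qed.

Lemma fsumD (V : lmodType K) N (r1 r2 : ps K X) (F : seq X -> V) :
  fsupp N r1 -> fsupp N r2 -> fsum (r1 + r2) F = fsum r1 F + fsum r2 F.
Proof.
move=> H1 H2; rewrite (fsumE _ (fsuppD H1 H2)) (fsumE _ H1) (fsumE _ H2) -big_split.
by apply: eq_bigr => u _; rewrite psE_add scalerDl.
Qed.
Lemma fsumZ (V : lmodType K) N a (r : ps K X) (F : seq X -> V) :
  fsupp N r -> fsum (a *: r) F = a *: fsum r F.
Proof.
move=> H; rewrite (fsumE _ (fsuppZ a H)) (fsumE _ H) scaler_sumr.
by apply: eq_bigr => u _; rewrite psE_scale scalerA.
Qed.
Lemma fsum0 (V : lmodType K) (F : seq X -> V) : fsum 0 F = 0.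
Proof. by rewrite (fsumE _ (@fsupp0 K X 0)) big1 // => u _; rewrite psE_zero scale0r. Qed.
Lemma fsumN (V : lmodType K) N (r : ps K X) (F : seq X -> V) :
  fsupp N r -> fsum (- r) F = - fsum r F.
Proof. by move=> H; rewrite -(scaleN1r r) (fsumZ _ _ H) scaleN1r. Qed.
Lemma fsumB (V : lmodType K) N (r1 r2 : ps K X) (F : seq X -> V) :
  fsupp N r1 -> fsupp N r2 -> fsum (r1 - r2) F = fsum r1 F - fsum r2 F.
Proof. by move=> H1 H2; rewrite (fsumD _ H1 (fsuppN H2)) (fsumN _ H2). Qed.
Lemma fsum_mon (V : lmodType K) w (F : seq X -> V) : fsum (mon K w) F = F w.
Proof.
rewrite (fsumE _ (@fsupp_mon K X w)) (eq_bigr (fun u => (u == w)%:R *: F u)) //.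
by rewrite sum_pick ?uniq_wupto // mem_wupto ltnSn.
Qed.
Lemma fsum_sum (V : lmodType K) N (I : Type) (s : seq I) (G : I -> ps K X) (F : seq X -> V) :
  (forall i, fsupp N (G i)) -> fsum (\sum_(i <- s) G i) F = \sum_(i <- s) fsum (G i) F.
Proof.
move=> H; elim: s => [|i s IH]; first by rewrite !big_nil fsum0.
by rewrite !big_cons (fsumD _ (H i) (fsupp_sum _ H)) IH.
Qed.
Lemma fsum_ext (V : lmodType K) (r : ps K X) (F F' : seq X -> V) :
  (forall w, F w = F' w) -> fsum r F = fsum r F'.
Proof. by move=> H; rewrite /fsum; apply: eq_bigr => u _; rewrite H. Qed.

End Gen.

Section NC.
Variables (K : comNzRingType) (Z : finType).
Implicit Types f g : ps K Z.

Lemma ncp_low f : is_ncpoly f -> low 1 f.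
Proof. by case=> f0 _ [|x w]. Qed.
Lemma ncp_fs f : is_ncpoly f -> exists N, fsupp N f.
Proof. by case. Qed.
Lemma ncpI N f : low 1 f -> fsupp N f -> is_ncpoly f.
Proof. by move=> hl hf; split; [exact: hl|exists N]. Qed.
Lemma ncp0 : is_ncpoly (0 : ps K Z).
Proof. by split=> //; exists 0%N. Qed.
Lemma ncpD f g : is_ncpoly f -> is_ncpoly g -> is_ncpoly (f + g).
Proof.
move=> hf hg; have [N1 h1] := ncp_fs hf; have [N2 h2] := ncp_fs hg.
apply: (@ncpI (maxn N1 N2)); first exact: lowD (ncp_low hf) (ncp_low hg).
by apply: fsuppD; [apply: (fsupp_le (leq_maxl N1 N2) h1)|apply: (fsupp_le (leq_maxr N1 N2) h2)].
Qed.
Lemma ncpZ a f : is_ncpoly f -> is_ncpoly (a *: f).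
Proof.
move=> hf; have [N h] := ncp_fs hf.
exact: (ncpI (lowZ a (ncp_low hf)) (fsuppZ a h)).
Qed.
Lemma ncpN f : is_ncpoly f -> is_ncpoly (- f).
Proof. by move=> hf; rewrite -scaleN1r; apply: ncpZ. Qed.
Lemma ncpB f g : is_ncpoly f -> is_ncpoly g -> is_ncpoly (f - g).
Proof. by move=> hf hg; apply: ncpD => //; apply: ncpN. Qed.
Lemma ncp_sum (I : Type) (r : seq I) (F : I -> ps K Z) :
  (forall i, is_ncpoly (F i)) -> is_ncpoly (\sum_(i <- r) F i).
Proof.
move=> H; elim: r => [|i r IH]; first by rewrite big_nil; exact: ncp0.
by rewrite big_cons; apply: ncpD.
Qed.
Lemma ncpMp f g N : is_ncpoly f -> fsupp N g -> is_ncpoly (f * g).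
Proof.
move=> hf hg; have [N1 h1] := ncp_fs hf.
apply: (ncpI _ (fsuppM h1 hg)).
have := lowM (ncp_low hf) (_ : low 0 g); rewrite addn0; apply; by [].
Qed.
Lemma ncpM f g : is_ncpoly f -> is_ncpoly g -> is_ncpoly (f * g).
Proof. by move=> hf hg; have [N h] := ncp_fs hg; apply: ncpMp h. Qed.
Lemma ncpMl f g N : fsupp N f -> is_ncpoly g -> is_ncpoly (f * g).
Proof.
move=> hf hg; have [N1 h1] := ncp_fs hg.
apply: (ncpI _ (fsuppM hf h1)).
by have := lowM (_ : low 0 f) (ncp_low hg); rewrite add0n; apply.
Qed.
Lemma ncp_mon (u : seq Z) : u != [::] -> is_ncpoly (mon K u).
Proof.
move=> hu; apply: (ncpI (N := (size u).+1)); last exact: fsupp_mon.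
move=> -[|x w] //= _.
by rewrite /mon; case: eqP => // E; rewrite -E in hu.
Qed.

End NC.

Section Main.
Variables (K : comNzRingType) (X : finType) (R : ps K X -> Prop).
Hypothesis HR : is_right_ideal R.
Variable k0 : nat.

Definition T := seq_sub (wupto X k0.+1).
Local Notation V := {ffun T -> K^o}.

Lemma memT w : (w \in wupto X k0.+1) = (size w <= k0)%N.
Proof. by rewrite mem_wupto ltnS. Qed.
Lemma ssval_inj : injective (@ssval _ (wupto X k0.+1)).
Proof. exact: val_inj. Qed.
Lemma sizeT (t : T) : (size (ssval t) <= k0)%N.
Proof. by rewrite -memT; exact: ssvalP. Qed.
Lemma t0P : [::] \in wupto X k0.+1.
Proof. by rewrite memT. Qed.
Definition t0 : T := SeqSub t0P.

Lemma sumT (W : zmodType) (F : seq X -> W) :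
  \sum_(t : T) F (ssval t) = \sum_(u <- wupto X k0.+1) F u.
Proof.
rewrite -[in RHS](val_seq_sub_enum (uniq_wupto X k0.+1)) big_map.
have -> : index_enum T = seq_sub_enum (wupto X k0.+1) by rewrite /index_enum !unlock.
by [].
Qed.


Lemma sumT_pick (W : lmodType K) (F : seq X -> W) w : (size w <= k0)%N ->
  \sum_(t : T) ((ssval t == w)%:R : K) *: F (ssval t) = F w.
Proof.
move=> hw; rewrite (sumT (fun u => ((u == w)%:R : K) *: F u)) sum_pick ?uniq_wupto //.
by rewrite memT hw.
Qed.

Definition evec (w : seq X) : V := [ffun t => ((ssval t == w)%:R : K)].
Definition e0 : V := evec [::].
Definition poly (p : V) : ps K X := \sum_t (p t : K) *: mon K (ssval t).

Lemma evec_sum (p : V) : \sum_t (p t : K) *: evec (ssval t) = p.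
Proof.
apply/ffunP => t'; rewrite sum_ffunE (bigD1 t') //= !ffunE eqxx big1 ?addr0.
  exact: mulr1.
move=> t /negbTE ne; rewrite !ffunE (inj_eq ssval_inj) eq_sym ne; exact: mulr0.
Qed.

Lemma polyD p q : poly (p + q) = poly p + poly q.
Proof. by rewrite /poly -big_split; apply: eq_bigr => t _; rewrite ffunE scalerDl. Qed.
Lemma polyZ a p : poly (a *: p) = a *: poly p.
Proof. by rewrite /poly scaler_sumr; apply: eq_bigr => t _; rewrite ffunE scalerA. Qed.
Lemma poly0 : poly 0 = 0.
Proof. by rewrite /poly big1 // => t _; rewrite ffunE scale0r. Qed.
Lemma polyN p : poly (- p) = - poly p.
Proof. by rewrite -scaleN1r polyZ scaleN1r. Qed.
Lemma polyB p q : poly (p - q) = poly p - poly q.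
Proof. by rewrite polyD polyN. Qed.
Lemma poly_sum (I : Type) (r : seq I) (F : I -> V) :
  poly (\sum_(i <- r) F i) = \sum_(i <- r) poly (F i).
Proof.
elim: r => [|i r IH]; first by rewrite !big_nil poly0.
by rewrite !big_cons polyD IH.
Qed.
Lemma poly_evec w : (size w <= k0)%N -> poly (evec w) = mon K w.
Proof.
move=> hw; rewrite /poly (eq_bigr (fun t => ((ssval t == w)%:R : K) *: mon K (ssval t))).
  by rewrite sumT_pick.
by move=> t _; rewrite ffunE.
Qed.
Lemma poly_e0 : poly e0 = 1.
Proof. by rewrite poly_evec // mon_nil. Qed.

Variable cv : seq X -> V.
Hypothesis Hcv : forall w, size w = k0.+1 -> R (mon K w - poly (cv w)).

Definition stw (u : seq X) (x : X) : V :=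
  if (size u < k0)%N then evec (rcons u x) else cv (rcons u x).
Definition act1 (p : V) (x : X) : V := \sum_t (p t : K) *: stw (ssval t) x.
Definition act (p : V) (w : seq X) : V := foldl act1 p w.

Lemma act1D p q x : act1 (p + q) x = act1 p x + act1 q x.
Proof. by rewrite /act1 -big_split; apply: eq_bigr => t _; rewrite ffunE scalerDl. Qed.
Lemma act1Z a p x : act1 (a *: p) x = a *: act1 p x.
Proof. by rewrite /act1 scaler_sumr; apply: eq_bigr => t _; rewrite ffunE scalerA. Qed.
Lemma act1_evec w x : (size w <= k0)%N -> act1 (evec w) x = stw w x.
Proof.
move=> hw; rewrite /act1 (eq_bigr (fun t => ((ssval t == w)%:R : K) *: stw (ssval t) x)).
  exact: (sumT_pick (fun u => stw u x) hw).
by move=> t _; rewrite ffunE.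
Qed.
Lemma actD w : forall p q, act (p + q) w = act p w + act q w.
Proof. by elim: w => [|x w IH] p q //=; rewrite act1D IH. Qed.
Lemma actZ w : forall a p, act (a *: p) w = a *: act p w.
Proof. by elim: w => [|x w IH] a p //=; rewrite act1Z IH. Qed.
Lemma act1_0 x : act1 0 x = 0.
Proof. by rewrite /act1 big1 // => t _; rewrite ffunE scale0r. Qed.
Lemma act0 w : act 0 w = 0.
Proof. by elim: w => [|x w IH] //=; rewrite act1_0. Qed.
Lemma act_sum w (I : Type) (r : seq I) (F : I -> V) :
  act (\sum_(i <- r) F i) w = \sum_(i <- r) act (F i) w.
Proof.
elim: r => [|i r IH]; first by rewrite !big_nil act0.
by rewrite !big_cons actD IH.
Qed.
Lemma act_cat p u v : act p (u ++ v) = act (act p u) v.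
Proof. by rewrite /act foldl_cat. Qed.
Lemma act_cons p x w : act p (x :: w) = act (act1 p x) w.
Proof. by []. Qed.
Lemma act_evec u v : (size (u ++ v) <= k0)%N -> act (evec u) v = evec (u ++ v).
Proof.
elim: v u => [|x v IH] u h; first by rewrite cats0.
rewrite act_cons act1_evec; last by move: h; rewrite size_cat /=; lia.
rewrite /stw ifT; last by move: h; rewrite size_cat /=; lia.
by rewrite IH -cats1 -catA.
Qed.
Lemma act_e0 (t : T) : act e0 (ssval t) = evec (ssval t).
Proof. by rewrite /e0 act_evec ?sizeT. Qed.

Definition rho (t : T) (x : X) : ps K X := mon K (rcons (ssval t) x) - poly (stw (ssval t) x).
Definition lg (t : T) : K := (size (ssval t) == k0)%:R.

Lemma rho_short t x : (size (ssval t) < k0)%N -> rho t x = 0.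
Proof.
move=> h; rewrite /rho /stw h poly_evec ?subrr // size_rcons //.
Qed.
Lemma lg_rho t x : lg t *: rho t x = rho t x.
Proof.
rewrite /lg; case: eqP => [_|ne]; first by rewrite scale1r.
rewrite rho_short ?scaler0 //; have := sizeT t; rewrite leq_eqVlt; case/orP => // /eqP.
by move=> E; case: ne.
Qed.

Lemma monM1 (w : seq X) (x : X) : mon K (rcons w x) = mon K w * mon K [:: x].
Proof. by rewrite monM cats1. Qed.

Lemma sum_rho (p : V) x : \sum_t (p t : K) *: rho t x = poly p * mon K [:: x] - poly (act1 p x).
Proof.
rewrite /rho /act1 poly_sum; under eq_bigr do rewrite scalerBr.
rewrite sumrB; congr (_ - _).
  by rewrite /poly mulr_suml; apply: eq_bigr => t _; rewrite monM1 scalerAl.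
by apply: eq_bigr => t _; rewrite polyZ.
Qed.


Lemma R0 : R 0. Proof. by case: HR => _ [h _]. Qed.
Lemma RD (f g : ps K X) : R f -> R g -> R (f + g). Proof. by case: HR => _ [_ [h _]]; apply: h. Qed.
Lemma RZ a (f : ps K X) : R f -> R (a *: f). Proof. by case: HR => _ [_ [_ [h _]]]; apply: h. Qed.
Lemma Rnc (f : ps K X) : R f -> is_ncpoly f. Proof. by case: HR => h _; apply: h. Qed.
Lemma RM (f g : ps K X) : R f -> is_ncpoly g -> R (f * g). Proof. by case: HR => _ [_ [_ [_ h]]]; apply: h. Qed.
Lemma RN (f : ps K X) : R f -> R (- f). Proof. by move=> h; rewrite -scaleN1r; apply: RZ. Qed.
Lemma RB (f g : ps K X) : R f -> R g -> R (f - g). Proof. by move=> hf hg; apply: RD => //; apply: RN. Qed.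
Lemma Rsum (I : Type) (r : seq I) (F : I -> ps K X) :
  (forall i, R (F i)) -> R (\sum_(i <- r) F i).
Proof.
move=> H; elim: r => [|i r IH]; first by rewrite big_nil; exact: R0.
by rewrite big_cons; apply: RD.
Qed.
Lemma RMp (f g : ps K X) N : R f -> fsupp N g -> R (f * g).
Proof.
move=> hf hg.
have -> : f * g = g [::] *: f + f * (g - g [::] *: 1).
  by rewrite mulrBr -scalerAr mulr1 addrC subrK.
apply: RD; first exact: RZ.
apply: RM => //; apply: (ncpI (N := maxn N 1)).
  by move=> -[|x w] //= _; rewrite psE_sub psE_scale psE_one mulr1 subrr.
apply: fsuppD; first exact: (fsupp_le (leq_maxl N 1) hg).
apply: fsuppN; apply: fsuppZ; rewrite -mon_nil.
exact: (fsupp_le (leq_maxr N 1) (@fsupp_mon K X [::])).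
Qed.


Lemma rhoR t x : R (rho t x).
Proof.
case: (ltnP (size (ssval t)) k0) => h; first by rewrite rho_short //; exact: R0.
have E : size (ssval t) = k0 by apply/eqP; rewrite eqn_leq sizeT h.
by rewrite /rho /stw ltnNge h /=; apply: Hcv; rewrite size_rcons E.
Qed.

Variable np : nat.
Variable sig : 'I_np -> V.
Hypothesis Hsig : forall j, R (poly (sig j)).
Hypothesis Qgen : forall q : V, R (poly q) -> exists c : 'I_np -> K, q = \sum_j c j *: sig j.
Variable nz : nat.
Variable z : 'I_nz -> 'I_np -> K.
Hypothesis Hz : forall l, \sum_j z l j *: sig j = 0.
Hypothesis Zgen : forall c : 'I_np -> K, \sum_j c j *: sig j = 0 ->
  exists d : 'I_nz -> K, forall j, c j = \sum_l d l * z l j.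

Definition G := ('I_np + (T * X))%type.
Definition gimg (g : G) : ps K X :=
  match g with inl j => poly (sig j) | inr tx => rho tx.1 tx.2 end.
Lemma gimgR (g : G) : R (gimg g).
Proof. by case: g => [j|[t x]] /=; [exact: Hsig|exact: rhoR]. Qed.
Definition Y := (G * T)%type.
Definition yimg (y : Y) : ps K X := gimg y.1 * mon K (ssval y.2).
Lemma yimgR y : R (yimg y).
Proof. exact: (RMp (gimgR _) (@fsupp_mon K X _)). Qed.
Lemma Hyimg y : low 1 (yimg y).
Proof. exact: ncp_low (Rnc (yimgR y)). Qed.
Definition phi : ps K Y -> ps K X := subst yimg.
Definition ybar (y : Y) : ps K Y := mon K [:: y].

Lemma phi_ybar y : phi (ybar y) = yimg y.
Proof. by rewrite /phi /ybar (subst_mon Hyimg) Mw_cons Mw_nil mulr1. Qed.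
Lemma yimg_t0 (g : G) : yimg (g, t0) = gimg g.
Proof. by rewrite /yimg /= mon_nil mulr1. Qed.
Lemma phiD F1 F2 : phi (F1 + F2) = phi F1 + phi F2. Proof. exact: substD. Qed.
Lemma phiZ a F : phi (a *: F) = a *: phi F. Proof. exact: substZ. Qed.
Lemma phiN F : phi (- F) = - phi F. Proof. exact: substN. Qed.
Lemma phiB F1 F2 : phi (F1 - F2) = phi F1 - phi F2. Proof. exact: substB. Qed.
Lemma phi0 : phi 0 = 0. Proof. exact: subst0. Qed.
Lemma phiM F1 F2 : phi (F1 * F2) = phi F1 * phi F2. Proof. exact: (substM Hyimg). Qed.
Lemma phi_sum (I : Type) (r : seq I) (F : I -> ps K Y) :
  phi (\sum_(i <- r) F i) = \sum_(i <- r) phi (F i).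
Proof. exact: subst_sum. Qed.

Definition Ypart (g : G) (p : V) : ps K Y := \sum_t (p t : K) *: ybar (g, t).
Lemma phi_Ypart (g : G) (p : V) : phi (Ypart g p) = gimg g * poly p.
Proof.
rewrite /Ypart phi_sum /poly mulr_sumr; apply: eq_bigr => t _.
by rewrite phiZ phi_ybar /yimg /= scalerAr.
Qed.

Fixpoint Psi (w : seq X) (p : V) : ps K Y :=
  match w with
  | [::] => 0
  | x :: w' => \sum_t (lg t * p t) *: (Ypart (inr (t, x)) (act e0 w') + ybar (inr (t, x), t0) * Psi w' e0)
               + Psi w' (act1 p x)
  end.
Definition Lam (w : seq X) (g : G) : ps K Y := Ypart g (act e0 w) + ybar (g, t0) * Psi w e0.
Lemma Psi_nil p : Psi [::] p = 0. Proof. by []. Qed.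
Lemma Psi_cons x w p :
  Psi (x :: w) p = \sum_t (lg t * p t) *: Lam w (inr (t, x)) + Psi w (act1 p x).
Proof. by []. Qed.

Lemma phi_tel w : (forall p, phi (Psi w p) = poly p * mon K w - poly (act p w)) /\
                  (forall g, phi (Lam w g) = gimg g * mon K w).
Proof.
elim: w => [|x w [IHP IHL]].
  split=> [p|g0]; first by rewrite Psi_nil phi0 mon_nil mulr1 subrr.
  by rewrite /Lam Psi_nil mulr0 addr0 phi_Ypart /act /= poly_e0 mon_nil.
have HP : forall p, phi (Psi (x :: w) p) = poly p * mon K (x :: w) - poly (act p (x :: w)).
  move=> p; rewrite Psi_cons phiD phi_sum IHP act_cons.
  under eq_bigr do rewrite phiZ IHL /= mulrC -scalerA scalerAl lg_rho scalerAl.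
  rewrite -mulr_suml sum_rho mulrBl -mulrA monM /= addrA subrK.
  done.
split=> // g0; rewrite /Lam phiD phi_Ypart phiM phi_ybar yimg_t0 HP poly_e0 mul1r.
by rewrite mulrBr addrC subrK.
Qed.


Lemma PsiD w : forall p q, Psi w (p + q) = Psi w p + Psi w q.
Proof.
elim: w => [|x w IH] p q; first by rewrite !Psi_nil addr0.
rewrite !Psi_cons act1D IH addrACA -big_split; congr (_ + _).
by apply: eq_bigr => t _; rewrite ffunE mulrDr scalerDl.
Qed.
Lemma PsiZ w : forall a p, Psi w (a *: p) = a *: Psi w p.
Proof.
elim: w => [|x w IH] a p; first by rewrite !Psi_nil scaler0.
rewrite !Psi_cons act1Z IH scalerDr scaler_sumr; congr (_ + _).
by apply: eq_bigr => t _; rewrite ffunE scalerA mulrCA.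
Qed.
Lemma Psi0 w : Psi w 0 = 0.
Proof. by rewrite -(scale0r (0 : V)) PsiZ scale0r. Qed.
Lemma Psi_sum w (I : Type) (r : seq I) (F : I -> V) :
  Psi w (\sum_(i <- r) F i) = \sum_(i <- r) Psi w (F i).
Proof.
elim: r => [|i r IH]; first by rewrite !big_nil Psi0.
by rewrite !big_cons PsiD IH.
Qed.

Lemma Psi_short u : forall s v, (size (s ++ u) <= k0)%N ->
  Psi (u ++ v) (evec s) = Psi v (evec (s ++ u)).
Proof.
elim: u => [|x u IH] s v h; first by rewrite cats0.
have hs : (size s < k0)%N by move: h; rewrite size_cat /=; lia.
rewrite cat_cons Psi_cons big1 ?add0r; last first.
  move=> t _; rewrite ffunE; case: eqP => [E|_]; last by rewrite mulr0 scale0r.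
  by rewrite /lg E (_ : (size s == k0) = false) ?mul0r ?scale0r //; apply/negbTE; rewrite neq_ltn hs.
rewrite act1_evec ?(ltnW hs) // /stw hs IH; first by rewrite cat_rcons.
by rewrite cat_rcons.
Qed.
Lemma Psi_e0_cat (t : T) v : Psi (ssval t ++ v) e0 = Psi v (evec (ssval t)).
Proof. by rewrite /e0 Psi_short // sizeT. Qed.
Lemma Psi_e0_T (t : T) : Psi (ssval t) e0 = 0.
Proof. by rewrite -(cats0 (ssval t)) Psi_e0_cat Psi_nil. Qed.

Definition ehat (r : ps K X) : V := fsum r (act e0).
Definition Lpsi (r : ps K X) : ps K Y := fsum r (fun w => Psi w e0).

Lemma fsupp_poly p : fsupp k0.+1 (poly p).
Proof.
by apply: fsupp_sum => t; apply: fsuppZ; apply: fsupp_le (@fsupp_mon K X _); rewrite ltnS sizeT.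
Qed.
Lemma poly_mon_expand (p : V) v : poly p * mon K v = \sum_t (p t : K) *: mon K (ssval t ++ v).
Proof. by rewrite /poly mulr_suml; apply: eq_bigr => t _; rewrite -scalerAl monM. Qed.
Lemma fsupp_polymon (p : V) v : fsupp (k0 + size v).+1 (poly p * mon K v).
Proof.
rewrite poly_mon_expand; apply: fsupp_sum => t; apply: fsuppZ.
by apply: fsupp_le (@fsupp_mon K X _); rewrite size_cat ltnS leq_add2r sizeT.
Qed.
Lemma fsum_polymon (W : lmodType K) (p : V) v (F : seq X -> W) :
  fsum (poly p * mon K v) F = \sum_t (p t : K) *: F (ssval t ++ v).
Proof.
rewrite poly_mon_expand (@fsum_sum _ _ _ (k0 + size v).+1); last first.
  move=> t; apply: fsuppZ; apply: fsupp_le (@fsupp_mon K X _).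
  by rewrite size_cat ltnS leq_add2r sizeT.
apply: eq_bigr => t _; rewrite (@fsumZ _ _ _ (size (ssval t ++ v)).+1) ?fsum_mon //.
exact: fsupp_mon.
Qed.
Lemma ehat_polymon p v : ehat (poly p * mon K v) = act p v.
Proof.
rewrite /ehat fsum_polymon.
under eq_bigr do rewrite act_cat act_e0.
by rewrite -{2}(evec_sum p) act_sum; apply: eq_bigr => t _; rewrite actZ.
Qed.
Lemma Lpsi_polymon p v : Lpsi (poly p * mon K v) = Psi v p.
Proof.
rewrite /Lpsi fsum_polymon; under eq_bigr do rewrite Psi_e0_cat.
by rewrite -{2}(evec_sum p) Psi_sum; apply: eq_bigr => t _; rewrite PsiZ.
Qed.
Lemma poly_mon0 p : poly p * mon K [::] = poly p.
Proof. by rewrite mon_nil mulr1. Qed.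

Lemma phi_Lpsi N (r : ps K X) : fsupp N r -> phi (Lpsi r) = r - poly (ehat r).
Proof.
move=> H; rewrite /Lpsi /ehat !(fsumE _ H) phi_sum poly_sum.
rewrite [X in _ = X - _](ps_expand H) -sumrB.
apply: eq_bigr => u _; rewrite phiZ (proj1 (phi_tel u)) poly_e0 mul1r polyZ.
by rewrite scalerBr.
Qed.

Definition Can (r : ps K X) (c : 'I_np -> K) : ps K Y :=
  \sum_j c j *: ybar (inl j, t0) + Lpsi r.
Lemma phi_Can N (r : ps K X) c : fsupp N r -> phi (Can r c) = poly (\sum_j c j *: sig j) + (r - poly (ehat r)).
Proof.
move=> H; rewrite /Can phiD (phi_Lpsi H) phi_sum; congr (_ + _).
rewrite poly_sum; by apply: eq_bigr => j _; rewrite phiZ phi_ybar yimg_t0 polyZ.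
Qed.



Lemma ncp_ybar y : is_ncpoly (ybar y).
Proof. exact: ncp_mon. Qed.
Lemma ncp_Ypart (g : G) (p : V) : is_ncpoly (Ypart g p).
Proof. by apply: ncp_sum => t; apply: ncpZ; apply: ncp_ybar. Qed.
Lemma ncp_PsiLam w : (forall p, is_ncpoly (Psi w p)) /\ (forall g, is_ncpoly (Lam w g)).
Proof.
elim: w => [|x w [IHP IHL]].
  split=> [p|g0]; first exact: ncp0.
  by rewrite /Lam Psi_nil mulr0 addr0; apply: ncp_Ypart.
have HP : forall p, is_ncpoly (Psi (x :: w) p).
  move=> p; rewrite Psi_cons; apply: ncpD => //.
  by apply: ncp_sum => t; apply: ncpZ.
split=> // g0; rewrite /Lam; apply: ncpD; first exact: ncp_Ypart.
by apply: ncpM => //; apply: ncp_ybar.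
Qed.
Lemma ncp_Psi w p : is_ncpoly (Psi w p). Proof. exact: (proj1 (ncp_PsiLam w)). Qed.
Lemma ncp_Lam w g : is_ncpoly (Lam w g). Proof. exact: (proj2 (ncp_PsiLam w)). Qed.
Lemma ncp_Lpsi r : is_ncpoly (Lpsi r).
Proof. by apply: ncp_sum => u; apply: ncpZ; apply: ncp_Psi. Qed.
Lemma ncp_Can r c : is_ncpoly (Can r c).
Proof.
apply: ncpD; last exact: ncp_Lpsi.
by apply: ncp_sum => j; apply: ncpZ; apply: ncp_ybar.
Qed.

Lemma Mw_R (u : seq Y) : u != [::] -> R (Mw yimg u).
Proof.
elim: u => [|y u IH] // _; rewrite Mw_cons.
case: u IH => [|y' u'] IH; first by rewrite Mw_nil mulr1; apply: yimgR.
by apply: RM; [apply: yimgR|apply: Rnc; apply: IH].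
Qed.
Lemma phiR F : is_ncpoly F -> R (phi F).
Proof.
move=> hF; have [N HN] := ncp_fs hF; rewrite /phi (subst_expand Hyimg HN).
apply: Rsum => u; case: u => [|y u].
  by case: hF => -> _; rewrite scale0r; apply: R0.
by apply: RZ; apply: Mw_R.
Qed.
Lemma ncp_phi F : is_ncpoly F -> is_ncpoly (phi F).
Proof. by move=> h; apply: Rnc; apply: phiR. Qed.

Lemma ehat_ex (r : ps K X) : R r -> exists c : 'I_np -> K, ehat r = \sum_j c j *: sig j.
Proof.
move=> Hr; apply: Qgen; have [N HN] := ncp_fs (Rnc Hr).
have E := phi_Lpsi HN.
have -> : poly (ehat r) = r - phi (Lpsi r) by rewrite E opprB addrC subrK.
by apply: RB => //; apply: phiR; apply: ncp_Lpsi.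
Qed.
Definition cfor (r : ps K X) : 'I_np -> K :=
  match pselect (exists c : 'I_np -> K, ehat r = \sum_j c j *: sig j) with
  | left H => projT1 (cid H) | right _ => fun _ => 0 end.
Lemma cforP r : R r -> ehat r = \sum_j cfor r j *: sig j.
Proof.
move=> Hr; rewrite /cfor; case: pselect => [H|n]; first exact: (projT2 (cid H)).
by case: n; apply: ehat_ex.
Qed.

Definition relF (F : ps K Y) : ps K Y := F - Can (phi F) (cfor (phi F)).
Definition J := ('I_nz + (Y + Y * Y))%type.
Definition relJ (j : J) : ps K Y :=
  match j with
  | inl l => \sum_j z l j *: ybar (inl j, t0)
  | inr (inl y) => relF (ybar y)
  | inr (inr yy) => relF (ybar yy.1 * ybar yy.2)
  end.

Lemma phi_relF F : is_ncpoly F -> phi (relF F) = 0.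
Proof.
move=> hF; have HR' := phiR hF; have [N HN] := ncp_fs (Rnc HR').
by rewrite /relF phiB (phi_Can _ HN) -(cforP HR') [_ + (_ - _)]addrC subrK subrr.
Qed.
Lemma phi_relJ j : phi (relJ j) = 0.
Proof.
case: j => [l|[y|[y1 y2]]] /=.
- rewrite phi_sum (eq_bigr (fun j => poly (z l j *: sig j))).
    by rewrite -poly_sum Hz poly0.
  by move=> j _; rewrite phiZ phi_ybar yimg_t0 polyZ.
- by apply: phi_relF; apply: ncp_ybar.
- by apply: phi_relF; apply: ncpM; apply: ncp_ybar.
Qed.
Lemma ncp_relJ j : is_ncpoly (relJ j).
Proof.
case: j => [l|[y|[y1 y2]]] /=.
- by apply: ncp_sum => j; apply: ncpZ; apply: ncp_ybar.
- by apply: ncpB; [apply: ncp_ybar|apply: ncp_Can].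
- by apply: ncpB; [apply: ncpM; apply: ncp_ybar|apply: ncp_Can].
Qed.

Definition nrel := #|{: J}|.
Definition rels (i : 'I_nrel) : ps K Y := relJ (enum_val i).
Definition I0 (F : ps K Y) : Prop := in_gen_ideal rels F.

Lemma I0_rel j : I0 (relJ j).
Proof. by have := gi_gen rels (enum_rank j); rewrite /rels enum_rankK. Qed.
Lemma I00 : I0 0. Proof. exact: gi_zero. Qed.
Lemma I0D F1 F2 : I0 F1 -> I0 F2 -> I0 (F1 + F2). Proof. exact: gi_add. Qed.
Lemma I0Z a F : I0 F -> I0 (a *: F). Proof. exact: gi_scale. Qed.
Lemma I0N F : I0 F -> I0 (- F). Proof. by move=> h; rewrite -scaleN1r; apply: I0Z. Qed.
Lemma I0B F1 F2 : I0 F1 -> I0 F2 -> I0 (F1 - F2). Proof. by move=> h1 h2; apply: I0D => //; apply: I0N. Qed.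
Lemma I0Ml (M F : ps K Y) : is_ncpoly M -> I0 F -> I0 (M * F). Proof. exact: gi_mull. Qed.
Lemma I0Mr (F M : ps K Y) : is_ncpoly M -> I0 F -> I0 (F * M). Proof. by move=> h1 h2; apply: gi_mulr. Qed.
Lemma I0_sum (I : Type) (r : seq I) (F : I -> ps K Y) :
  (forall i, I0 (F i)) -> I0 (\sum_(i <- r) F i).
Proof.
move=> H; elim: r => [|i r IH]; first by rewrite big_nil; exact: I00.
by rewrite big_cons; apply: I0D.
Qed.
Lemma phi_I0 F : I0 F -> phi F = 0.
Proof.
elim => {F}.
- by move=> i; apply: phi_relJ.
- exact: phi0.
- by move=> f g _ h1 _ h2; rewrite (phiD f g) h1 h2 addr0.
- by move=> c f _ h; rewrite (phiZ c f) h scaler0.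
- by move=> a f _ _ h; rewrite (phiM a f) h mulr0.
- by move=> f b _ _ h; rewrite (phiM f b) h mul0r.
Qed.


Implicit Types Z : ps K Y.
Definition W (Z : ps K Y) : Prop :=
  is_ncpoly Z /\ exists c : 'I_np -> K,
    ehat (phi Z) = \sum_j c j *: sig j /\ I0 (Z - Can (phi Z) c).

Lemma fs_phi Z : is_ncpoly Z -> exists N, fsupp N (phi Z).
Proof. by move=> h; apply: ncp_fs; apply: ncp_phi. Qed.

Lemma Lpsi0 : Lpsi 0 = 0. Proof. exact: fsum0. Qed.
Lemma ehat0 : ehat 0 = 0. Proof. exact: fsum0. Qed.

Lemma W0 : W 0.
Proof.
split; first exact: ncp0.
exists (fun _ => 0); rewrite phi0 ehat0; split.
  by rewrite big1 // => j _; rewrite scale0r.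
rewrite /Can Lpsi0 addr0 big1 ?subrr; first exact: I00.
by move=> j _; rewrite scale0r.
Qed.

Lemma WD Z1 Z2 : W Z1 -> W Z2 -> W (Z1 + Z2).
Proof.
move=> [h1 [c1 [e1 i1]]] [h2 [c2 [e2 i2]]].
have [N1 f1] := fs_phi h1; have [N2 f2] := fs_phi h2.
have g1 : fsupp (maxn N1 N2) (phi Z1) by apply: fsupp_le f1; rewrite leq_maxl.
have g2 : fsupp (maxn N1 N2) (phi Z2) by apply: fsupp_le f2; rewrite leq_maxr.
split; first exact: ncpD.
exists (fun j => c1 j + c2 j); rewrite phiD; split.
  by rewrite /ehat (fsumD _ g1 g2) -/(ehat _) -/(ehat _) e1 e2 -big_split; apply: eq_bigr => j _; rewrite scalerDl.
have -> : Can (phi Z1 + phi Z2) (fun j => c1 j + c2 j) = Can (phi Z1) c1 + Can (phi Z2) c2.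
  rewrite /Can /Lpsi (fsumD _ g1 g2) addrACA -big_split; congr (_ + _).
  by apply: eq_bigr => j _; rewrite scalerDl.
by rewrite opprD addrACA; apply: I0D.
Qed.

Lemma WZ a Z : W Z -> W (a *: Z).
Proof.
move=> [h [c [e i]]]; have [N f] := fs_phi h.
split; first exact: ncpZ.
exists (fun j => a * c j); rewrite phiZ; split.
  by rewrite /ehat (fsumZ _ _ f) -/(ehat _) e scaler_sumr; apply: eq_bigr => j _; rewrite scalerA.
have -> : Can (a *: phi Z) (fun j => a * c j) = a *: Can (phi Z) c.
  rewrite /Can /Lpsi (fsumZ _ _ f) scalerDr scaler_sumr; congr (_ + _).
  by rewrite scaler_sumr; apply: eq_bigr => j _; rewrite scalerA.
by rewrite -scalerBr; apply: I0Z.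
Qed.

Lemma WN Z : W Z -> W (- Z). Proof. by move=> h; rewrite -scaleN1r; apply: WZ. Qed.
Lemma WB Z1 Z2 : W Z1 -> W Z2 -> W (Z1 - Z2). Proof. by move=> h1 h2; apply: WD => //; apply: WN. Qed.
Lemma W_sum (I : Type) (r : seq I) (F : I -> ps K Y) :
  (forall i, W (F i)) -> W (\sum_(i <- r) F i).
Proof.
move=> H; elim: r => [|i r IH]; first by rewrite big_nil; exact: W0.
by rewrite big_cons; apply: WD.
Qed.

Lemma Wequiv Z Z' : is_ncpoly Z -> I0 (Z - Z') -> W Z' -> W Z.
Proof.
move=> h i [h' [c [e i']]].
have E : phi Z = phi Z'.
  by apply/eqP; rewrite -subr_eq0 -phiB; apply/eqP; apply: phi_I0.
split=> //; exists c; rewrite E; split=> //.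
by rewrite -(subrK Z' Z) -addrA; apply: I0D.
Qed.

Lemma W_gen F : is_ncpoly F -> I0 (relF F) -> W F.
Proof.
move=> h i; split=> //; exists (cfor (phi F)); split=> //.
by apply: cforP; apply: phiR.
Qed.
Lemma W_ybar y : W (ybar y).
Proof. exact: (W_gen (ncp_ybar y) (I0_rel (inr (inl y)))). Qed.
Lemma W_ybar2 y1 y2 : W (ybar y1 * ybar y2).
Proof. exact: (W_gen (ncpM (ncp_ybar y1) (ncp_ybar y2)) (I0_rel (inr (inr (y1, y2))))). Qed.

Lemma W_Psi w p : W (Psi w p).
Proof.
split; first exact: ncp_Psi.
have E : phi (Psi w p) = poly p * mon K w - poly (act p w) * mon K [::].
  by rewrite (proj1 (phi_tel w)) poly_mon0.
have f1 : fsupp (k0 + size w).+1 (poly p * mon K w) by apply: fsupp_polymon.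
have f2 : fsupp (k0 + size w).+1 (poly (act p w) * mon K [::]).
  apply: (fsupp_le _ (fsupp_polymon (act p w) (v:=[::]))); by rewrite /= addn0 ltnS leq_addr.
exists (fun _ => 0); rewrite E; split.
  rewrite /ehat (fsumB _ f1 f2) -!/(ehat _) !ehat_polymon /= subrr.
  by rewrite big1 // => j _; rewrite scale0r.
rewrite /Can /Lpsi (fsumB _ f1 f2) -!/(Lpsi _) !Lpsi_polymon Psi_nil subr0.
rewrite big1 ?add0r ?subrr; first exact: I00.
by move=> j _; rewrite scale0r.
Qed.

Lemma Psi_evec_cons x w (t : T) :
  Psi (x :: w) (evec (ssval t)) = lg t *: Lam w (inr (t, x)) + Psi w (act1 (evec (ssval t)) x).
Proof.
rewrite Psi_cons; congr (_ + _).
rewrite (bigD1 t) //= ffunE eqxx mulr1 big1 ?addr0 // => t' ne.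
by rewrite ffunE (inj_eq ssval_inj) (negbTE ne) mulr0 scale0r.
Qed.

Lemma W_Lam w (t : T) x : lg t = 1 -> W (Lam w (inr (t, x))).
Proof.
move=> h; have := Psi_evec_cons x w t; rewrite h scale1r => E.
have -> : Lam w (inr (t, x)) = Psi (x :: w) (evec (ssval t)) - Psi w (act1 (evec (ssval t)) x).
  by rewrite E addrK.
by apply: WB; apply: W_Psi.
Qed.

Lemma W_Ypart (g : G) p : W (Ypart g p).
Proof. by apply: W_sum => t; apply: WZ; apply: W_ybar. Qed.

Lemma W_yPsi w (t : T) x : lg t = 1 -> W (ybar (inr (t, x), t0) * Psi w e0).
Proof.
move=> h; have -> : ybar (inr (t, x), t0) * Psi w e0 = Lam w (inr (t, x)) - Ypart (inr (t, x)) (act e0 w).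
  by rewrite /Lam addrC addKr.
by apply: WB; [apply: W_Lam|apply: W_Ypart].
Qed.

Lemma Lpsi_unfold r : Lpsi r = \sum_(u <- wupto X (bnd r)) r u *: Psi u e0.
Proof. by []. Qed.

Lemma W_PsiY w : forall p y, W (Psi w p * ybar y).
Proof.
elim: w => [|x w IH] p y; first by rewrite Psi_nil mul0r; exact: W0.
rewrite Psi_cons mulrDl mulr_suml; apply: WD; last exact: IH.
apply: W_sum => t; rewrite -scalerAl.
case: (eqVneq (size (ssval t)) k0) => [E|ne]; last first.
  by rewrite /lg (negbTE ne) mul0r scale0r; exact: W0.
have hl : lg t = 1 by rewrite /lg E eqxx.
apply: WZ; rewrite /Lam mulrDl -mulrA; apply: WD.
  by rewrite /Ypart mulr_suml; apply: W_sum => t'; rewrite -scalerAl; apply: WZ; apply: W_ybar2.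
have [hP [c [e i]]] := IH e0 y.
apply: (@Wequiv _ (ybar (inr (t, x), t0) * Can (phi (Psi w e0 * ybar y)) c)).
- by apply: ncpM; [apply: ncp_ybar|case: (IH e0 y)].
- by rewrite -mulrBr; apply: I0Ml => //; apply: ncp_ybar.
rewrite /Can mulrDr mulr_sumr Lpsi_unfold mulr_sumr; apply: WD.
  by apply: W_sum => j; rewrite -scalerAr; apply: WZ; apply: W_ybar2.
by apply: W_sum => u; rewrite -scalerAr; apply: WZ; apply: W_yPsi.
Qed.

Lemma W_mon (u : seq Y) : u != [::] -> W (mon K u).
Proof.
elim/last_ind: u => [|u y IH] // _.
case: (eqVneq u [::]) => [->|ne]; first exact: W_ybar.
have [hP [c [e i]]] := IH ne.
have -> : mon K (rcons u y) = mon K u * ybar y by rewrite /ybar monM cats1.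
apply: (@Wequiv _ (Can (phi (mon K u)) c * ybar y)).
- by apply: ncpM => //; apply: ncp_ybar.
- by rewrite -mulrBl; apply: I0Mr => //; apply: ncp_ybar.
rewrite /Can mulrDl mulr_suml Lpsi_unfold mulr_suml; apply: WD.
  by apply: W_sum => j; rewrite -scalerAl; apply: WZ; apply: W_ybar2.
by apply: W_sum => u'; rewrite -scalerAl; apply: WZ; apply: W_PsiY.
Qed.

Lemma W_all Z : is_ncpoly Z -> W Z.
Proof.
move=> h; have [N HN] := ncp_fs h; rewrite (ps_expand HN).
apply: W_sum => -[|y u].
  by case: h => -> _; rewrite scale0r; exact: W0.
by apply: WZ; apply: W_mon.
Qed.

Lemma ker_phi Z : is_ncpoly Z -> phi Z = 0 -> I0 Z.
Proof.
move=> h E; have [_ [c [e i]]] := W_all h.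
rewrite E ehat0 in e; have [d Hd] := Zgen (esym e).
rewrite E /Can Lpsi0 addr0 in i.
rewrite -(subrK (\sum_j c j *: ybar (inl j, t0)) Z); apply: I0D => //.
have -> : \sum_j c j *: ybar (inl j, t0) = \sum_l d l *: relJ (inl l).
  under eq_bigr do rewrite Hd scaler_suml.
  rewrite exchange_big /=; apply: eq_bigr => l _; rewrite scaler_sumr.
  by apply: eq_bigr => j _; rewrite scalerA.
by apply: I0_sum => l; apply: I0Z; apply: I0_rel.
Qed.

Lemma phi_surj r : R r -> exists f, is_ncpoly f /\ phi f = r.
Proof.
move=> Hr; have [N HN] := ncp_fs (Rnc Hr).
exists (Can r (cfor r)); split; first exact: ncp_Can.
by rewrite (phi_Can _ HN) -(cforP Hr) addrC subrK.
Qed.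

Theorem present : fin_presented_subalg R.
Proof.
exists Y, phi, nrel, rels.
split; first by move=> i; apply: ncp_relJ.
split.
  split; first by move=> f g _ _; exact: phiD.
  split; first by move=> c f _; exact: phiZ.
  by move=> f g _ _; exact: phiM.
split; first by move=> f hf; apply: phiR.
split; first exact: phi_surj.
move=> f hf; split; first exact: ker_phi.
exact: phi_I0.
Qed.

End Main.

Theorem lemma2p3 (K : comNzRingType) (X : finType) (R : (seq X -> K) -> Prop) :
  noetherian K ->
  is_right_ideal R ->
  quotient_fg R ->
  fin_presented_subalg R.
Proof.
move=> HK HR [n [g [Hg Hq]]].
pose Nf i := projT1 (cid (ncp_fs (Hg i))).
have HNf : forall i, fsupp (Nf i) (g i) by move=> i; exact: (projT2 (cid (ncp_fs (Hg i)))).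
pose k0 := \max_(i < n) Nf i.
have Hk0 : forall i w, (k0 < size w)%N -> g i w = 0.
  move=> i w hw; apply: HNf; apply: leq_trans (ltnW hw); exact: leq_bigmax.
have Hex : forall w : seq X, exists c : {ffun T X k0 -> K^o},
    size w = k0.+1 -> R (mon K w - poly c).
  move=> w; case: (eqVneq (size w) k0.+1) => [hw|hw]; last by exists 0 => E; rewrite E eqxx in hw.
  have hm : is_ncpoly (mon K w) by apply: ncp_mon; rewrite -size_eq0 hw.
  have [c' Hc'] := Hq _ hm.
  pose cc : {ffun T X k0 -> K^o} := [ffun t => \sum_i c' i * g i (ssval t)].
  exists cc => _.
  suff E : mon K w - poly cc =
      (fun w0 => mon K w w0 - \sum_(i < n) c' i * g i w0) by rewrite E.
  apply: funext => v; rewrite psE_sub; congr (_ - _).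
  rewrite /poly psE_sum.
  rewrite (eq_bigr (fun t => (fun u => (\sum_i c' i * g i u) * mon K u v) (ssval t))); last first.
    by move=> t _; rewrite psE_scale ffunE.
  rewrite (sumT k0 (fun u => (\sum_i c' i * g i u) * mon K u v)) sum_mon_pt ?uniq_wupto // mem_wupto ltnS.
  case: leqP => // hv; rewrite big1 // => i _; rewrite Hk0 ?mulr0 //.
pose cv w := projT1 (cid (Hex w)).
have Hcv : forall w, size w = k0.+1 -> R (mon K w - poly (cv w)).
  by move=> w; exact: (projT2 (cid (Hex w))).
have RR := HR; case: RR => _ [R0 [RD [RZ _]]].
have sQ : submod (fun q : {ffun T X k0 -> K^o} => R (poly q)).
  split; first by rewrite poly0.
  split; first by move=> u v hu hv; rewrite polyD; apply: RD.
  by move=> a u hu; rewrite polyZ; apply: RZ.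
have [np [sig [Hsig Qgen]]] := fgen_submod HK sQ.
have sS : submod (fun c : {ffun 'I_np -> K^o} => \sum_j (c j : K) *: sig j = 0).
  split; first by rewrite big1 // => j _; rewrite ffunE scale0r.
  split.
    move=> u v hu hv; rewrite (eq_bigr (fun j => (u j : K) *: sig j + (v j : K) *: sig j)).
      by rewrite big_split /= hu hv addr0.
    by move=> j _; rewrite ffunE scalerDl.
  move=> a u hu; rewrite (eq_bigr (fun j => a *: ((u j : K) *: sig j))).
    by rewrite -scaler_sumr hu scaler0.
  by move=> j _; rewrite ffunE scalerA.
have [nz [zz [Hzz Zgen]]] := fgen_submod HK sS.
pose z l j : K := zz l j.
apply: (@present _ _ _ HR k0 cv Hcv np sig Hsig Qgen nz z).
  by move=> l; exact: Hzz.
move=> c Hc.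
have Hc' : \sum_j (([ffun j => c j] : {ffun 'I_np -> K^o}) j : K) *: sig j = 0.
  by rewrite (eq_bigr (fun j => c j *: sig j)) ?Hc // => j _; rewrite ffunE.
have [d Hd] := Zgen _ Hc'.
exists d => j; have := congr1 (fun f : {ffun 'I_np -> K^o} => f j) Hd.
by rewrite /= ffunE sum_ffunE => ->; apply: eq_bigr => l _; rewrite ffunE.
Qed.
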